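(* Let $x_1,\dots,x_n$ be fixed data, $1\le k\le n$, and $s$ a real-valued permutation-symmetric function of $k$ arguments. Let $(I_1,\dots,I_k)$ be uniformly distributed over all $k$-tuples of distinct indices in $\{1,\dots,n\}$ (subsampling without replacement), $X_i^*=x_{I_i}$, $s^*=s(X_1^*,\dots,X_k^* )$, and $w_j^*=\mathbf{1}\{j\in\{I_1,\dots,I_k\}\}$. With $\mathbb{E}_*,\mathrm{Cov}_*$ denoting expectation and covariance over this subsampling, let $e_j=\mathbb{E}_*[s^*\mid I_1=j]$ and $s_0=\mathbb{E}_*[s^*]$. Then for every $j$, $$\mathrm{Cov}_*(s^*,w_j^* )=\frac{k}{n}(e_j-s_0),$$ and consequently $$\sum_{j=1}^n\mathrm{Cov}_*^2(s^*,w_j^* )=\left(\frac{k}{n}\right)^2\sum_{j=1}^n(e_j-s_0)^2 .$$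
   Context: Equivalently $e_j=\binom{n-1}{k-1}^{-1}\sum_{S\ni j}s(x_S)$ and $s_0=\binom{n}{k}^{-1}\sum_S s(x_S)$, sums over $k$-subsets $S\subseteq\{1,\dots,n\}$. The quantity $\sum_j\mathrm{Cov}_*^2(s^*,w_j^* )$ is called the pseudo infinitesimal jackknife $\mathrm{ps}\text{-}\mathrm{IJ}_\mathrm{U}$. *)

(* Defs.v *)
From HB Require Import structures.
From mathcomp Require Import all_boot all_order all_algebra all_fingroup.
Set Implicit Arguments. Unset Strict Implicit. Unset Printing Implicit Defensive.
Import Order.TTheory GRing.Theory Num.Theory.
Local Open Scope ring_scope.

(* Subsampling without replacement: the sample space is the set of injective
   maps I : 'I_k -> 'I_n, i.e. k-tuples (I_1,...,I_k) of distinct indices,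
   with the uniform distribution. *)
Definition subsamples (n k : nat) : {set {ffun 'I_k -> 'I_n}} :=
  [set I : {ffun 'I_k -> 'I_n} | injectiveb I].

Definition Estar (R : realFieldType) (n k : nat) (f : {ffun 'I_k -> 'I_n} -> R) : R :=
  (\sum_(I in subsamples n k) f I) / #|subsamples n k|%:R.

Definition Estar_cond (R : realFieldType) (n k : nat)
    (f : {ffun 'I_k -> 'I_n} -> R) (P : pred {ffun 'I_k -> 'I_n}) : R :=
  (\sum_(I in subsamples n k | P I) f I)
    / #|[set I in subsamples n k | P I]|%:R.

Definition Covstar (R : realFieldType) (n k : nat) (f g : {ffun 'I_k -> 'I_n} -> R) : R :=
  Estar (fun I => f I * g I) - Estar f * Estar g.

Definition sstar (R : realFieldType) (T : Type) (n k : nat)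
    (s : {ffun 'I_k -> T} -> R) (x : 'I_n -> T) (I : {ffun 'I_k -> 'I_n}) : R :=
  s [ffun i => x (I i)].

Definition wstar (R : realFieldType) (n k : nat) (j : 'I_n) (I : {ffun 'I_k -> 'I_n}) : R :=
  (j \in codom I)%:R.

Definition perm_symmetric (R : realFieldType) (T : Type) (k : nat)
    (s : {ffun 'I_k -> T} -> R) : Prop :=
  forall (sigma : 'S_k) (v : {ffun 'I_k -> T}), s [ffun i => v (sigma i)] = s v.

(* Main.v *)
Require Import Defs.
From HB Require Import structures.
From mathcomp Require Import all_boot all_order all_algebra all_fingroup.
From mathcomp Require Import ring.
Import Order.TTheory GRing.Theory Num.Theory.
Local Open Scope ring_scope.

Section S.
Variables (R : realFieldType) (n k : nat).
Local Notation S := (subsamples n k).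
Local Notation FF := {ffun 'I_k -> 'I_n}.

Lemma inj_perm (I : FF) (sg : 'S_k) :
  injectiveb [ffun t => I (sg t)] = injectiveb I.
Proof.
apply/injectiveP/injectiveP => H a b.
  move=> E; have := H (sg^-1 a)%g (sg^-1 b)%g.
  by rewrite !ffunE !permKV => /(_ E) /perm_inj.
rewrite !ffunE => E; exact: perm_inj (H _ _ E).
Qed.

Lemma sum_sym (g : FF -> R)
  (hg : forall (sg : 'S_k) (I : FF), g [ffun t => I (sg t)] = g I) j i i' :
  \sum_(I in S | I i == j) g I = \sum_(I in S | I i' == j) g I.
Proof.
rewrite (reindex_inj (h := fun I : FF => [ffun t => I (tperm i i' t)])).
  apply: eq_big => I; last by rewrite hg.
  by rewrite !inE inj_perm ffunE tpermL.
move=> I1 I2 /ffunP H; apply/ffunP => t; have := H (tperm i i' t).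
by rewrite !ffunE tpermK.
Qed.

Lemma w_sum (I : FF) (j : 'I_n) : injective I ->
  ((j \in codom I)%:R : R) = \sum_(i < k) ((I i == j)%:R).
Proof.
move=> inj; case: (boolP (j \in codom I)) => [/codomP [i0 ->]| H].
  rewrite (bigD1 i0) //= eqxx big1 ?addr0 // => i ne.
  by rewrite (inj_eq inj) (negbTE ne).
rewrite big1 // => i _; case: eqP => // E; case/negP: H; rewrite -E codom_f //.
Qed.

Lemma sum_w (g : FF -> R)
  (hg : forall (sg : 'S_k) (I : FF), g [ffun t => I (sg t)] = g I)
  (hk : (0 < k)%N) j :
  \sum_(I in S) g I * wstar R j I = k%:R * \sum_(I in S | I (Ordinal hk) == j) g I.
Proof.
rewrite (eq_bigr (fun I => \sum_(i < k) g I * (I i == j)%:R)); last first.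
  by move=> I; rewrite inE => /injectiveP inj; rewrite /wstar w_sum // mulr_sumr.
have ->: (k%:R : R) = \sum_(i < k) 1 by rewrite sumr_const card_ord.
rewrite exchange_big /= mulr_suml.
apply: eq_bigr => i _; rewrite mul1r -(@sum_sym g hg j i (Ordinal hk)).
rewrite big_mkcondr /=; apply: eq_bigr => I _.
by case: (I i == j); rewrite ?mulr1 ?mulr0.
Qed.

Lemma card_sym (hk : (0 < k)%N) (j j' : 'I_n) :
  \sum_(I in S | I (Ordinal hk) == j) (1 : R) = \sum_(I in S | I (Ordinal hk) == j') 1.
Proof.
rewrite (reindex_inj (h := fun I : FF => [ffun t => tperm j j' (I t)])).
  apply: eq_big => I //.
  rewrite !inE ffunE; congr andb.
    apply/injectiveP/injectiveP => H a b.
      move=> E; apply: H; by rewrite !ffunE E.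
    rewrite !ffunE => E; exact: H (perm_inj E).
  by rewrite -[X in _ == X](tpermR j j') (inj_eq perm_inj).
move=> I1 I2 /ffunP H; apply/ffunP => t; have := H t.
by rewrite !ffunE => /perm_inj.
Qed.

End S.

Theorem proposition1 (R : realFieldType) (T : Type) (n k : nat)
    (hk1 : (0 < k)%N) (hkn : (k <= n)%N)
    (x : 'I_n -> T) (s : {ffun 'I_k -> T} -> R)
    (hsym : perm_symmetric s) :
  let sst := sstar s x in
  let s0 := Estar sst in
  let e := fun j : 'I_n => Estar_cond sst (fun I => I (Ordinal hk1) == j) in
  (forall j : 'I_n,
     Covstar sst (wstar R j) = (k%:R / n%:R) * (e j - s0)) /\
  \sum_(j < n) (Covstar sst (wstar R j)) ^+ 2
    = (k%:R / n%:R) ^+ 2 * \sum_(j < n) (e j - s0) ^+ 2.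
Proof.
move=> sst s0 e.
set i0 := Ordinal hk1.
have hf : forall (sg : 'S_k) (I : {ffun 'I_k -> 'I_n}),
    sst [ffun t => I (sg t)] = sst I.
  move=> sg I; rewrite /sst /sstar -(hsym sg [ffun i => x (I i)]).
  by congr s; apply/ffunP => t; rewrite !ffunE.
pose C j := \sum_(I in subsamples n k | I i0 == j) (1 : R).
have hN : forall j, (#|subsamples n k|%:R : R) = n%:R * C j.
  move=> j; rewrite -sumr_const (partition_big (fun I : {ffun 'I_k -> 'I_n} => I i0) predT) //=.
  rewrite (eq_bigr (fun _ => C j)); last by move=> j' _; rewrite (@card_sym R n k hk1 j' j).
  by rewrite sumr_const card_ord mulr_natl.
have hC : forall j, (#|[set I in subsamples n k | I i0 == j]|%:R : R) = C j.
  by move=> j; rewrite -sumr_const; apply: eq_bigl => I; rewrite !inE.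
have Npos : (0 < #|subsamples n k|)%N.
  apply/card_gt0P; exists [ffun i => widen_ord hkn i]; rewrite inE.
  by apply/injectiveP => a b; rewrite !ffunE => /(congr1 val) /= /val_inj.
have cov : forall j : 'I_n, Covstar sst (wstar R j) = (k%:R / n%:R) * (e j - s0).
  move=> j; rewrite /Covstar /s0 /e /Estar /Estar_cond.
  rewrite (@sum_w R n k sst hf hk1 j).
  have -> : \sum_(I in subsamples n k) wstar R j I = k%:R * C j.
    by rewrite -(@sum_w R n k (fun _ => 1) (fun _ _ => erefl) hk1 j); apply: eq_bigr => I _; rewrite mul1r.
  rewrite hC (hN j).
  have := hN j; have : (#|subsamples n k|%:R : R) != 0 by rewrite pnatr_eq0 -lt0n.
  move=> /[swap] -> ; rewrite mulf_eq0 negb_or => /andP [nn cn].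
  rewrite -/i0; field; by rewrite nn cn.
split => //.
rewrite mulr_sumr; apply: eq_bigr => j _; by rewrite cov exprMn.
Qed.
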